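(* Let $T$ be a tree of order $t\ge 2$ and let $\pi=(d_1,\dots,d_n)$ be a nonincreasing graphic sequence with $n\ge t$. If $d_{t-1}\ge t-1$, then $\pi$ is potentially $T$-graphic.
   Context: All graphs are finite and simple. A sequence of nonnegative integers $\pi=(d_1,\dots,d_n)$ with $d_1\ge d_2\ge\dots\ge d_n$ is graphic if some graph of order $n$ has degree sequence $\pi$; such a graph is a realization of $\pi$. For a graph $H$, a graphic sequence $\pi$ is potentially $H$-graphic if some realization of $\pi$ contains $H$ as a subgraph. *)

(* Defs.v *)
From mathcomp Require Import all_boot.
Set Implicit Arguments. Unset Strict Implicit. Unset Printing Implicit Defensive.

Definition simple_graph (V : finType) (e : rel V) : Prop :=
  symmetric e /\ irreflexive e.

Definition deg (V : finType) (e : rel V) (x : V) : nat := #|[pred y | e x y]|.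

Definition connected_graph (V : finType) (e : rel V) : Prop :=
  forall x y : V, connect e x y.

Definition acyclic (V : finType) (e : rel V) : Prop :=
  forall c : seq V, uniq c -> 3 <= size c -> ~~ cycle e c.

Definition is_tree (V : finType) (e : rel V) : Prop :=
  [/\ simple_graph e, connected_graph e & acyclic e].

(* e is a realization of d = (d_1,...,d_n): a simple graph on vertices
   0..n-1 where vertex i has degree d_(i+1). *)
Definition realization (d : seq nat) (e : rel 'I_(size d)) : Prop :=
  simple_graph e /\ forall i : 'I_(size d), deg e i = nth 0 d i.

Definition graphic (d : seq nat) : Prop :=
  exists e : rel 'I_(size d), realization e.

Definition contains_subgraph (VH VG : finType) (eH : rel VH) (eG : rel VG) : Prop :=
  exists f : VH -> VG, injective f /\ forall x y, eH x y -> eG (f x) (f y).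

Definition potentially_graphic (VH : finType) (eH : rel VH) (d : seq nat) : Prop :=
  graphic d /\ exists e : rel 'I_(size d), realization e /\ contains_subgraph eH e.

(* Main.v *)
Require Import Defs.
From mathcomp Require Import all_boot zify.
From Stdlib Require Import Lia.

Definition pairb {T : eqType} (u v a b : T) :=
  ((u == a) && (v == b)) || ((u == b) && (v == a)).

Definition switch {n : nat} (G : rel 'I_n) (w x s y : 'I_n) : rel 'I_n :=
  fun u v => (G u v && ~~ pairb u v w x && ~~ pairb u v s y)
             || pairb u v w s || pairb u v x y.

Lemma pairb_symab {T : eqType} (u v a b : T) : pairb u v a b = pairb u v b a.
Proof. by rewrite /pairb orbC. Qed.

Lemma pairb_symuv {T : eqType} (u v a b : T) : pairb u v a b = pairb v u a b.
Proof. by rewrite /pairb orbC andbC [(v == b) && _]andbC. Qed.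

Lemma pairb_nz {T : eqType} (z v a b : T) : z != a -> z != b -> pairb z v a b = false.
Proof. by rewrite /pairb => /negbTE-> /negbTE->. Qed.

Lemma switch_perm1 n (G : rel 'I_n) w x s y u v :
  switch G w x s y u v = switch G x w y s u v.
Proof. by rewrite /switch (pairb_symab u v x w) (pairb_symab u v y s) orbAC. Qed.

Lemma switch_perm2 n (G : rel 'I_n) w x s y u v :
  switch G w x s y u v = switch G s y w x u v.
Proof. by rewrite /switch (pairb_symab u v s w) (pairb_symab u v y x) -andbA [~~ _ && _]andbC andbA. Qed.

Lemma switch_at n (G : rel 'I_n) w x s y v :
  w != x -> w != s -> w != y ->
  switch G w x s y w v = (G w v && (v != x)) || (v == s).
Proof.
move=> wx ws wy; rewrite /switch /pairb eqxx (negbTE wx) (negbTE ws) (negbTE wy) /=.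
by rewrite ?andbF ?orbF ?andbT.
Qed.

Lemma switch_other n (G : rel 'I_n) w x s y z v :
  z != w -> z != x -> z != s -> z != y -> switch G w x s y z v = G z v.
Proof.
move=> zw zx zs zy; rewrite /switch !pairb_nz //.
by rewrite andbT andbT !orbF.
Qed.

Lemma switch_sym n (G : rel 'I_n) w x s y :
  symmetric G -> symmetric (switch G w x s y).
Proof.
by move=> sG u v; rewrite /switch sG (pairb_symuv u v) (pairb_symuv u v s y)
   (pairb_symuv u v w s) (pairb_symuv u v x y).
Qed.

Lemma switch_irr n (G : rel 'I_n) w x s y :
  irreflexive G -> w != s -> x != y -> irreflexive (switch G w x s y).
Proof.
move=> iG ws xy u; rewrite /switch iG /=.
apply/negbTE; rewrite negb_or /pairb.
by apply/andP; split; apply/negP => /orP[] /andP[/eqP e1 /eqP e2];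
  [move: ws | move: ws | move: xy | move: xy]; rewrite -e1 -e2 eqxx.
Qed.

Lemma degE (V : finType) (e : rel V) z : deg e z = #|[set y | e z y]|.
Proof. by rewrite /deg; apply: eq_card => v; rewrite !inE. Qed.

Lemma deg_swap {V : finType} {G Gp : rel V} {z a b} :
  G z a -> ~~ G z b -> (forall v, Gp z v = (G z v && (v != a)) || (v == b)) ->
  deg Gp z = deg G z.
Proof.
move=> Ga Gb H; rewrite !degE.
have -> : [set y | Gp z y] = b |: ([set y | G z y] :\ a).
  by apply/setP => v; rewrite !inE H orbC andbC.
rewrite cardsU1 !inE (negbTE Gb) andbF /= (cardsD1 a [set y | G z y]) inE Ga.
by rewrite add1n.
Qed.

Lemma rel_neq {V : finType} {G : rel V} {a b} : irreflexive G -> G a b -> a != b.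
Proof. by move=> iG Gab; apply/eqP => E; move: Gab; rewrite E iG. Qed.

Lemma switch_simple n (G : rel 'I_n) w x s y :
  simple_graph G -> G w x -> G s y -> ~~ G w s -> ~~ G x y -> w != s -> x != y ->
  simple_graph (switch G w x s y) /\ (forall z, deg (switch G w x s y) z = deg G z).
Proof.
move=> [sG iG] Gwx Gsy Gws Gxy ws xy.
split; first by split; [apply: switch_sym | apply: switch_irr].
have wx := rel_neq iG Gwx; have sy := rel_neq iG Gsy.
have xs : x != s by apply/eqP => E; move: Gws; rewrite -E Gwx.
have wy : w != y by apply/eqP => E; move: Gws; rewrite sG E Gsy.
have Gsw : ~~ G s w by rewrite sG.
have Gyx : ~~ G y x by rewrite sG.
move=> z.
case: (eqVneq z w) => [->|zw].
  by apply: (deg_swap Gwx Gws) => v; rewrite switch_at.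
case: (eqVneq z x) => [->|zx].
  have Gxw : G x w by rewrite sG.
  apply: (deg_swap Gxw Gxy).
  by move=> v; rewrite switch_perm1 switch_at // eq_sym.
case: (eqVneq z s) => [->|zs].
  apply: (deg_swap Gsy Gsw).
  by move=> v; rewrite switch_perm2 switch_at // ?(eq_sym s w) // eq_sym.
case: (eqVneq z y) => [->|zy].
  have Gys : G y s by rewrite sG.
  apply: (deg_swap Gys Gyx).
  by move=> v; rewrite switch_perm2 switch_perm1 switch_at // eq_sym.
by apply: eq_card => v; rewrite !inE switch_other.
Qed.

Lemma switch_keep n (G : rel 'I_n) w x s y a b :
  G a b -> ~~ pairb a b w x -> ~~ pairb a b s y -> switch G w x s y a b.
Proof. by move=> Gab h1 h2; rewrite /switch Gab h1 h2. Qed.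

Lemma switch_new n (G : rel 'I_n) w x s y : switch G w x s y w s.
Proof. by rewrite /switch /pairb !eqxx /= orbT. Qed.

Lemma find_final n (G : rel 'I_n) (F : {set 'I_n}) w m :
  simple_graph G -> w \in F -> #|F| <= m -> m <= deg G w ->
  exists u, G w u && (u \notin F).
Proof.
move=> [sG iG] wF Fm mw.
case: (pickP [pred u | G w u && (u \notin F)]) => [u hu|none]; first by exists u.
have sub : [set y | G w y] \subset F :\ w.
  apply/subsetP => y; rewrite !inE => Gwy.
  have := none y; rewrite /= Gwy /= => /negbFE ->.
  by rewrite andbT; apply/eqP => E; move: Gwy; rewrite E iG.
move: (subset_leq_card sub); rewrite -degE.
have := cardsD1 w F; rewrite wF /= => E.
move=> h; have H2 := leq_trans mw h; rewrite E add1n in Fm; have := leq_trans Fm H2; by rewrite ltnn.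
Qed.

Lemma find_high n (G : rel 'I_n) (F : {set 'I_n}) w m :
  simple_graph G -> w \in F -> #|F| < m -> m <= deg G w ->
  m <= #|[set i | m <= deg G i]| ->
  exists (G2 : rel 'I_n) u, [/\ simple_graph G2, (forall z, deg G2 z = deg G z),
     G2 w u, u \notin F & (m <= deg G u /\
     (forall a b, a \in F -> b \in F -> G a b -> G2 a b))].
Proof.
move=> sGG wF Fm mw Hm.
case: (pickP [pred u | [&& G w u, u \notin F & m <= deg G u]]) => [u /and3P[h1 h2 h3]|none].
  by exists G, u; split => //; split.
have [s sH sF] : exists2 s, s \in [set i | m <= deg G i] & s \notin F.
  apply/subsetPn; apply/negP => sub; have := subset_leq_card sub.
  by rewrite leqNgt (leq_trans Fm Hm).
rewrite inE in sH.
have [x /andP[Gwx xF]] := @find_final _ G F w m sGG wF (ltnW Fm) mw.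
have xlow : deg G x < m.
  by have := none x; rewrite /= Gwx xF /= => /negbT; rewrite -ltnNge.
have Gws : ~~ G w s.
  by apply/negP => Gws; have := none s; rewrite /= Gws sF sH.
case: sGG => sG iG.
have [y /and3P[Gsy yx Gxy]] : exists y, [&& G s y, y != x & ~~ G x y].
  case: (pickP [pred y | [&& G s y, y != x & ~~ G x y]]) => [y hy|none2]; first by exists y.
  exfalso.
  pose phi := fun y => if y == x then s else y.
  have inj : {in [set y | G s y] &, injective phi}.
    move=> y1 y2; rewrite !inE /phi.
    case: eqVneq => [->|y1x]; case: eqVneq => [->|y2x] //.
    - by move=> _ Gs2 E; move: Gs2; rewrite -E iG.
    - by move=> Gs1 _ E; move: Gs1; rewrite E iG.
  have sub : phi @: [set y | G s y] \subset [set y | G x y].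
    apply/subsetP => z /imsetP[y]; rewrite inE => Gsy ->; rewrite inE /phi.
    case: eqVneq => [E|yx]; first by rewrite sG -E.
    by have := none2 y; rewrite /= Gsy yx /= => /negbT; rewrite negbK.
  have := subset_leq_card sub; rewrite card_in_imset // -!degE => h.
  by have := leq_ltn_trans (leq_trans sH h) xlow; rewrite ltnn.
have ws : w != s by apply/eqP => E; move: wF; rewrite E (negbTE sF).
have xy : x != y by rewrite eq_sym.
have [sw dg] := @switch_simple _ G w x s y (conj sG iG) Gwx Gsy Gws Gxy ws xy.
exists (switch G w x s y), s; split => //; first exact: switch_new.
split => // a b aF bF Gab; apply: (@switch_keep _ G w x s y a b Gab); rewrite /pairb.
  have ax : (a == x) = false by apply/negbTE; apply/eqP => E; move: xF; rewrite -E aF.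
  have bx : (b == x) = false by apply/negbTE; apply/eqP => E; move: xF; rewrite -E bF.
  by rewrite ax bx !andbF.
have ax : (a == s) = false by apply/negbTE; apply/eqP => E; move: sF; rewrite -E aF.
have bx : (b == s) = false by apply/negbTE; apply/eqP => E; move: sF; rewrite -E bF.
by rewrite ax bx /= andbF.
Qed.

Definition connA {V : finType} (e : rel V) (A : {set V}) :=
  forall p q, p \in A -> q \in A ->
    exists s, [/\ path e p s, last p s = q & all (fun z => z \in A) s].

Lemma cross {V : finType} (e : rel V) (A : {set V}) s x :
  x \in A -> path e x s -> last x s \notin A ->
  exists p v, [/\ p \in A, v \notin A & e p v].
Proof.
elim: s x => [|y s IH] x xA /=; first by rewrite xA.
case/andP => exy pth lst.
case yA: (y \in A); first exact: IH yA pth lst.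
by exists x, y; rewrite yA.
Qed.

Lemma unique_parent {V : finType} (e : rel V) (A : {set V}) p q v :
  acyclic e -> connA e A -> p \in A -> q \in A -> v \notin A ->
  e v p -> e q v -> q = p.
Proof.
move=> ac cA pA qA vA evp eqv; case: (eqVneq q p) => // qp; exfalso.
have [s [pth lst alls]] := cA p q pA qA.
move: lst; case: (shortenP pth) => s' pth' uq' sub' lst'.
have := ac (v :: p :: s').
have vnot : v \notin p :: s'.
  rewrite inE negb_or; apply/andP; split.
    by apply/eqP => E; move: vA; rewrite E pA.
  apply/negP => /sub' vs; move/allP: alls => /(_ v vs); by rewrite (negbTE vA).
have sz : 3 <= size (v :: p :: s').
  case: s' {pth' uq' sub' vnot} lst' => //= E.
  by rewrite E eqxx in qp.
move=> /(_ _ sz) /negP; apply.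
  by rewrite cons_uniq vnot uq'.
rewrite /cycle /= evp rcons_path pth' /= lst' eqv //.
Qed.

Lemma conn_add {V : finType} (e : rel V) (A : {set V}) p0 v :
  connA e A -> p0 \in A -> e v p0 -> e p0 v -> connA e (v |: A).
Proof.
move=> cA p0A evp epv p q.
have sub : forall s, all (fun z => z \in A) s -> all (fun z => z \in v |: A) s.
  by move=> s; apply: sub_all => z zA; rewrite inE zA orbT.
case/setU1P => [->|pA]; case/setU1P => [->|qA].
- by exists [::].
- have [s [h1 h2 h3]] := cA p0 q p0A qA.
  exists (p0 :: s); split => //=; first by rewrite evp.
  by rewrite inE p0A orbT sub.
- have [s [h1 h2 h3]] := cA p p0 pA p0A.
  exists (rcons s v); split; first by rewrite rcons_path h1 h2 epv.
    by rewrite last_rcons.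
  by rewrite all_rcons setU11 sub.
- have [s [h1 h2 h3]] := cA p q pA qA.
  by exists s; split => //; rewrite sub.
Qed.

Definition Inv {V : finType} (eT : rel V) (d : seq nat) (k : nat) : Prop :=
  exists (A : {set V}) (G : rel 'I_(size d)) (f : V -> 'I_(size d)),
  [/\ #|A| = k, realization G, {in A &, injective f},
      (forall x y, x \in A -> y \in A -> eT x y -> G (f x) (f y))
    & (k < #|V| -> forall x, x \in A -> #|V| - 1 <= nth 0 d (f x)) /\ connA eT A].

Lemma step (V : finType) (eT : rel V) (d : seq nat) k :
  is_tree eT ->
  #|V| - 1 <= #|[set i : 'I_(size d) | #|V| - 1 <= nth 0 d i]| ->
  0 < k -> k < #|V| -> Inv eT d k -> Inv eT d k.+1.
Proof.
move=> [[sT iT] cT acT] Hcard k0 kt [A [G [f [cardA [sG degG] inj edges [high cA]]]]].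
have : 0 < #|A| by rewrite cardA.
move=> /card_gt0P [a aA].
have [b _ bA] : exists2 b, b \in [set: V] & b \notin A.
  apply/subsetPn; apply/negP => sub; have := subset_leq_card sub.
  by rewrite cardsT cardA leqNgt kt.
have /connectP [s pth lst] := cT a b.
rewrite lst in bA.
have [p [v [pA vA pv]]] := @cross _ eT A s a aA pth bA.
have vp : eT v p by rewrite sT.
have uniqp : forall q, q \in A -> eT q v -> q = p.
  by move=> q qA qv; apply: (@unique_parent _ eT A p q v acT cA pA qA vA vp qv).
set w := f p.
set m := #|V| - 1.
have mw : m <= deg G w by rewrite degG; apply: high.
set F := f @: A.
have cardF : #|F| = k by rewrite card_in_imset.
have wF : w \in F by apply: imset_f.
have [G2 [u [rG2 G2wu uF hu keep]]] : exists G2 u,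
    [/\ realization G2, G2 w u, u \notin F, (k.+1 < #|V| -> m <= nth 0 d u)
      & (forall a b, a \in F -> b \in F -> G a b -> G2 a b)].
  case: (ltnP k.+1 #|V|) => hk.
    have Fm : #|F| < m by rewrite cardF /m; move: hk; case: #|V| => // t; rewrite subn1.
    have Hm : m <= #|[set i | m <= deg G i]|.
      by rewrite (eq_card (B := [set i : 'I_(size d) | #|V| - 1 <= nth 0 d i])) // => i;
        rewrite !inE degG.
    have [G2 [u [sG2 dG2 G2wu uF [mu keep]]]] := @find_high _ G F w m sG wF Fm mw Hm.
    exists G2, u; split => //.
      by split => // i; rewrite dG2.
    by rewrite -degG.
  have Fm : #|F| <= m by rewrite cardF /m; move: kt; case: #|V| => // t; rewrite subn1.
  have [u /andP[Gwu uF]] := @find_final _ G F w m sG wF Fm mw.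
  exists G, u; split => //.
pose f' := fun z => if z == v then u else f z.
have fA : forall z, z \in A -> f' z = f z.
  move=> z zA; rewrite /f'; case: eqVneq => // E.
  by move: vA; rewrite -E zA.
have f'v : f' v = u by rewrite /f' eqxx.
case: rG2 => sG2 degG2.
exists (v |: A), G2, f'; split.
- by rewrite cardsU1 vA cardA.
- by [].
- move=> x y /setU1P[->|xA] /setU1P[->|yA] //.
  + rewrite f'v fA // => E; move: uF; by rewrite E imset_f.
  + rewrite f'v fA // => E; move: uF; by rewrite -E imset_f.
  + by rewrite !fA //; apply: inj.
- move=> x y /setU1P[->|xA] /setU1P[->|yA].
  + by rewrite iT.
  + move=> vy; have yv : eT y v by rewrite sT.
    rewrite (uniqp y yA yv) f'v fA //.
    by case: sG2 => sy _; rewrite sy.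
  + by move=> xv; rewrite (uniqp x xA xv) f'v fA.
  + by move=> exy; rewrite !fA //; apply: keep; rewrite ?imset_f //; apply: edges.
- split; last exact: (@conn_add _ eT A p v cA pA vp pv).
  move=> hk x /setU1P[->|xA]; first by rewrite f'v; apply: hu.
  by rewrite fA //; apply: high => //; apply: ltnW.
Qed.

Theorem lemma13 (V : finType) (eT : rel V) (d : seq nat) :
  is_tree eT -> 2 <= #|V| -> #|V| <= size d ->
  sorted geq d -> graphic d ->
  #|V| - 1 <= nth 0 d (#|V| - 2) ->
  potentially_graphic eT d.
Proof.
move=> tr t2 tn srt [G0 rG0] hd.
have geq_tr : transitive geq by move=> a b c /= h1 h2; apply: leq_trans h2 h1.
have geq_rf : reflexive geq by move=> a /=.
have mono : forall i, i <= #|V| - 2 -> #|V| - 1 <= nth 0 d i.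
  move=> i hi; apply: (leq_trans hd).
  have hs : #|V| - 2 < size d by lia.
  have := @sorted_leq_nth _ geq geq_tr geq_rf 0 d srt i (#|V| - 2).
  by apply => //; rewrite inE /=; lia.
have tn' : #|V| - 1 <= size d by apply: leq_trans tn; apply: leq_subr.
have Hcard : #|V| - 1 <= #|[set i : 'I_(size d) | #|V| - 1 <= nth 0 d i]|.
  have sub : [set widen_ord tn' i | i : 'I_(#|V| - 1)] \subset
             [set i : 'I_(size d) | #|V| - 1 <= nth 0 d i].
    apply/subsetP => z /imsetP [i _ ->]; rewrite inE /=; apply: mono.
    change (nat_of_ord i <= #|V| - 2); have := ltn_ord i; lia.
  have := subset_leq_card sub; rewrite card_imset ?card_ord //.
  by move=> i j /(congr1 val) /= /val_inj.
have dpos : 0 < size d by apply: leq_trans tn; apply: leq_trans t2.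
have Inv1 : Inv eT d 1.
  have /card_gt0P [a0 _] : 0 < #|V| by apply: leq_trans t2.
  exists [set a0], G0, (fun _ => Ordinal dpos); split.
  - by rewrite cards1.
  - by [].
  - by move=> x y /set1P -> /set1P ->.
  - by case: tr => [[_ iT] _ _] x y /set1P -> /set1P ->; rewrite iT.
  - split; first by move=> _ x _; apply: mono.
    by move=> p q /set1P -> /set1P ->; exists [::].
have Inv_all : forall k, 0 < k -> k <= #|V| -> Inv eT d k.
  elim => [//|k IH] _ hk.
  case: k IH hk => [//|k] IH hk.
  apply: (@step V eT d k.+1 tr Hcard) => //; apply: IH => //; exact: ltnW.
have [A [G [f [cardA rG inj edges [_ _]]]]] := Inv_all #|V| (leq_trans (isT : 0 < 2) t2) (leqnn _).
have AT : A = setT by apply/eqP; rewrite eqEcard subsetT cardsT cardA leqnn.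
split; first by exists G0.
exists G; split => //; exists f; split.
  by move=> x y; apply: inj; rewrite AT inE.
by move=> x y; apply: edges; rewrite AT inE.
Qed.
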